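(* Let $n\ge 1$ be an integer. Every set $A\subseteq\mathbb{Z}_{2^n}$ with $|A|=2^{n-1}+1$ satisfies $\mathrm{ST}(A)\ge 3\cdot 2^{n-1}$.
   Context: For $A\subseteq\mathbb{Z}_{2^n}$, $\mathrm{ST}(A)=|\{(x,y,z)\in A^3: x+y=z \text{ in } \mathbb{Z}_{2^n}\}|$ is the number of (ordered) Schur triples in $A$; in particular $(x,y,z)$ and $(y,x,z)$ are counted separately when $x\ne y$, and $x=y$ is allowed. *)

(* Defs.v *)
From mathcomp Require Import all_boot all_algebra.
Set Implicit Arguments. Unset Strict Implicit. Unset Printing Implicit Defensive.
Import GRing.Theory.
Local Open Scope ring_scope.

Definition ST (G : finZmodType) (A : {set G}) : nat :=
  #|[set t : G * G * G | [&& t.1.1 \in A, t.1.2 \in A, t.2 \in A &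
                             (t.1.1 + t.1.2)%R == t.2]]|%N.

(* Main.v *)
Require Import Defs.
From mathcomp Require Import all_boot all_algebra all_fingroup all_solvable zify.
Set Implicit Arguments. Unset Strict Implicit. Unset Printing Implicit Defensive.
Lemma addgE n (u v : 'Z_(2^n)) : (u * v)%g = (u + v)%R.
Proof. by []. Qed.

Section S. Local Open Scope group_scope.
Lemma rcosets_partition_mulS (gT : finGroupType) (G : {set gT}) (H : {group gT}) :
  partition (rcosets H G) (H * G)%g.
Proof.
set HG := (H * G)%g; have sGHG: {subset G <= HG} by apply/subsetP/mulG_subr.
have defHx x: x \in HG -> [set y in HG | rcoset H x == rcoset H y] = H :* x.
  move=> HGx; apply/setP=> y; rewrite inE !rcosetE (sameP eqP rcoset_eqP).
  by rewrite rcoset_sym; apply/andb_idl/subsetP; rewrite mulGS sub1set.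
have:= preim_partitionP (rcoset H) HG; congr (partition _ _); apply/setP=> Hx.
apply/imsetP/idP=> [[x HGx ->] | ]; first by rewrite defHx // mem_rcosets.
by case/rcosetsP=> x /sGHG-HGx ->; exists x; rewrite ?defHx.
Qed.
End S.

Lemma closed_even n (hn : 0 < n) (A : {set 'Z_(2^n)}) (x : 'Z_(2^n)) :
  x != 0%R -> (forall y, y \in A -> (x + y)%R \in A) -> 2 %| #|A|.
Proof.
move=> x0 cl.
have sub : (<[x]> * A)%g \subset A.
  apply/subsetP=> z /mulsgP[u a /cycleP[i ->] aA ->].
  elim: i => [|i IH]; first by rewrite expg0 mul1g.
  rewrite expgSr.
  have -> : (x ^+ i * x * a)%g = (x + (x ^+ i * a)%g)%R.
    by rewrite !addgE -GRing.addrA GRing.addrCA.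
  exact: cl.
have eqA : (<[x]> * A)%g = A.
  apply/eqP; rewrite eqEsubset sub /=; exact: mulG_subr.
rewrite -eqA (card_uniform_partition (n := #[x]%g) _ (rcosets_partition_mulS A <[x]>%G)); last first.
  by move=> _ /rcosetsP[y _ ->]; rewrite card_rcoset.
rewrite dvdn_mull //.
have hd : #[x]%g %| 2 ^ n.
  have := order_dvdG (in_setT x). rewrite cardsT card_ord Zp_cast //.
  by rewrite -{1}(expn0 2) ltn_exp2l.
case/(dvdn_pfactor _ _ (isT : prime 2)): hd => m _ hm.
rewrite hm; case: m hm => [|m] hm; last by rewrite expnS dvdn_mulr.
move/eqP: hm; rewrite expn0 order_eq1 => /eqP hx.
by move: x0; rewrite hx eqxx.
Qed.
Definition F (G : finZmodType) (A : {set G}) (x : G) :=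
  #|[set y in A | (x + y)%R \in A]|.

Lemma ST_sum (G : finZmodType) (A : {set G}) :
  ST A = \sum_(x in A) F A x.
Proof.
rewrite /ST.
have -> : [set t : G * G * G | [&& t.1.1 \in A, t.1.2 \in A, t.2 \in A &
                             (t.1.1 + t.1.2)%R == t.2]] =
  (fun p : G * G => (p, (p.1 + p.2)%R)) @:
     [set p : G * G | (p.1 \in A) && ((p.2 \in A) && ((p.1 + p.2)%R \in A))].
  apply/setP => [[[a b] c]]; rewrite inE /=; apply/idP/imsetP.
    case/and4P => aA bA cA /eqP ec; exists (a, b) => //=; last by rewrite ec.
    by rewrite inE /= aA bA ec cA.
  case=> [[a' b']]; rewrite inE /= => /and3P[aA bA cA] [-> -> ->].
  by rewrite aA bA cA eqxx.
rewrite card_imset; last by move=> p q [].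
rewrite -sum1dep_card.
rewrite -(pair_big_dep (fun x => x \in A) (fun x y => (y \in A) && ((x + y)%R \in A)) (fun _ _ => 1%N)).
by apply: eq_bigr => x _; rewrite sum1dep_card.
Qed.

Lemma F_total (G : finZmodType) (A : {set G}) :
  \sum_x F A x = (#|A| * #|A|)%N.
Proof.
rewrite /F.
under eq_bigr => x _ do rewrite -sum1dep_card.
rewrite (exchange_big_dep (fun y => y \in A)) /=; last by move=> x y _ /andP[].
rewrite -sum_nat_const; apply: eq_bigr => y yA.
under eq_bigl => x do rewrite yA /=.
rewrite sum1dep_card.
have -> : [set x | (x + y)%R \in A] = (fun z => (z - y)%R) @: A.
  apply/setP => x; rewrite inE; apply/idP/imsetP.
    by move=> h; exists (x + y)%R => //; rewrite GRing.addrK.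
  by case=> z zA ->; rewrite GRing.subrK.
by rewrite card_imset //; exact: GRing.addIr.
Qed.

Theorem theorem1p8 (n : nat) (hn : (1 <= n)%N) (A : {set 'Z_(2 ^ n)})
  (hA : #|A| = (2 ^ n.-1).+1) :
  (3 * 2 ^ n.-1 <= ST A)%N.
Proof.
case: n hn A hA => // n _ A hA /=.
have hN : #|'Z_(2^n.+1)| = 2^n.+1.
  have h2 : 1 < 2 ^ n.+1 by rewrite expnS; move: (expn_gt0 2 n) => /=; lia.
  by rewrite card_ord Zp_cast.
have key : forall x, x \notin A -> F A x + 1 <= #|A| + (x == 0%R).
  move=> x xA; have sub : [set y in A | (x + y)%R \in A] \subset A.
    by apply/subsetP => y; rewrite inE => /andP[].
  case: (eqVneq x 0%R) => [->|x0].
    by rewrite leq_add2r; apply: subset_leq_card; apply/subsetP=> y; rewrite inE => /andP[].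
  rewrite addn0 addn1 /F ltn_neqAle subset_leq_card // andbT.
  apply/negP => /eqP e.
  have cl : forall y, y \in A -> (x + y)%R \in A.
    move=> y yA; move: (subset_cardP e sub) => /(_ y).
    by rewrite yA inE yA /= => ->.
  have := closed_even (isT : 0 < n.+1) x0 cl.
  have [n0|npos] := posnP n.
    move=> _; have e2 : 2 ^ n = 1 by rewrite n0.
    have : #|~: A| = 0.
      have e3 : 2 ^ n.+1 = 2 by rewrite expnS e2.
      by move: (cardsC A); rewrite hA hN /= e2 => h; lia.
    by move/eqP; rewrite cards_eq0 => /eqP h; move: xA; rewrite -in_setC h inE.
  rewrite hA /= -(prednK npos) expnS -[(_ * _).+1]addn1 dvdn_addr //.
  exact: dvdn_mulr.
have tot := F_total A.
rewrite (bigID (fun x => x \in A)) /= in tot.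
have R : \sum_(x | x \notin A) (F A x + 1) <= \sum_(x | x \notin A) (#|A| + (x == 0%R)).
  by apply: leq_sum => x; exact: key.
rewrite !big_split /= in R.
have Z : \sum_(x | x \notin A) (x == 0%R : nat) <= 1.
  rewrite big_mkcond /=.
  apply: (@leq_trans (\sum_x (x == 0%R : nat))).
    by apply: leq_sum => x _; case: ifP.
  by rewrite (bigD1 0%R) //= big1 // => x /negPf ->.
have C : \sum_(x | x \notin A) 1 + #|A| = 2 ^ n.+1.
  apply: (etrans _ hN); rewrite sum1dep_card addnC -(cardsC A); congr (_ + _).
have K : \sum_(x | x \notin A) #|A| = (\sum_(x | x \notin A) 1) * #|A|.
  by rewrite big_distrl /=; apply: eq_bigr => *; rewrite mul1n.
rewrite K in R; rewrite ST_sum.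
have e : 2 ^ n.+1 = 2 * 2 ^ n := expnS 2 n.
have hA' : #|A| = (2 ^ n).+1 by rewrite hA.
clear key hN hA K.
set S1 := \sum_(i in A) F A i in tot *.
set S2 := \sum_(i | i \notin A) F A i in tot R.
set c := \sum_(i | i \notin A) 1 in R C.
set z := \sum_(i | i \notin A) (i == 0%R : nat) in R Z.
set a := #|A| in tot R C hA'.
move: S1 S2 c z a tot R Z C hA' e => S1 S2 c z a tot R Z C hA' e.
nia.
Qed.
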